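(* Let $\mathcal{A}$ be a CA of radius $r$ over alphabet $Q$ and $\mu$ a complete Bernoulli measure on $Q^{\mathbb{Z}}$. Then for any word $w\in Q^*$ and any persistent word $u\in L_\mu(\mathcal{A})$ there exist positive integers $k_1,k_2$ and a strictly increasing sequence of positive integers $(n_j)_{j\ge0}$ such that for all $j\ge0$, $$\mathcal{A}^{-n_j}(u)\cap\Big(Q^{rn_j-k_1-|w|}\cdot\{w\}\cdot Q^{k_1+k_2+|u|}\cdot\{w\}\cdot Q^{rn_j-k_2-|w|}\Big)\neq\emptyset .$$
   Context: A one-dimensional cellular automaton (CA) $\mathcal{A}$ is given by a finite alphabet $Q$, a radius $r\ge 0$ and a local rule $\delta:Q^{2r+1}\to Q$; it acts on configurations $c\in Q^{\mathbb{Z}}$ by $\mathcal{A}(c)_i=\delta(c_{i-r},\dots,c_{i+r})$. The local rule also maps any word $v$ of length $m\ge 2r+1$ to the word of length $m-2r$ obtained by applying $\delta$ to each window of length $2r+1$; for a word $u$ and $n\ge0$, $\mathcal{A}^{-n}(u)$ denotes the set of words $v$ of length $|u|+2rn$ whose image under $n$ such applications is $u$. For $u\in Q^*$, $i\in\mathbb{Z}$, $[u]_i=\{c\in Q^{\mathbb{Z}}: c_i\cdots c_{i+|u|-1}=u\}$. A Bernoulli measure $\mu$ on $Q^{\mathbb{Z}}$ is given by a probability vector $(p_a)_{a\in Q}$ with $\mu([u]_i)=\prod_{a\in Q}p_a^{|u|_a}$, where $|u|_a$ is the number of occurrences of $a$ in $u$; it is complete if $p_a>0$ for all $a$. $\mathcal{A}^n\mu(U)=\mu(\mathcal{A}^{-n}(U))$.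 A word $u$ is persistent for $(\mathcal{A},\mu)$ if $\mathcal{A}^n\mu([u]_0)$ does not tend to $0$ as $n\to\infty$; $L_\mu(\mathcal{A})$ is the set of persistent words. For sets of words $X,Y$, $X\cdot Y$ denotes concatenation and $Q^m$ the set of words of length $m$. *)

(* Defs.v *)
From HB Require Import structures.
From mathcomp Require Import all_boot all_order all_algebra.
From mathcomp Require Import all_classical all_reals all_analysis.
Set Implicit Arguments. Unset Strict Implicit. Unset Printing Implicit Defensive.
Import Order.TTheory GRing.Theory Num.Theory.
Import numFieldNormedType.Exports.
Local Open Scope ring_scope.
Local Open Scope classical_set_scope.

Definition local_rule (Q : finType) (r : nat) := (2 * r).+1.-tuple Q -> Q.

(* Image of a word v of length m under the local rule: the word of length
   m - 2r obtained by applying delta to each window of length 2r+1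
   (the empty word when m <= 2r). *)
Definition local_image (Q : finType) (r : nat) (delta : local_rule Q r)
  (v : seq Q) : seq Q :=
  match v with
  | [::] => [::]
  | x0 :: _ =>
      [seq delta [tuple nth x0 v (i + j) | j < (2 * r).+1]
        | i <- iota 0 (size v - 2 * r)%N]
  end.

Definition in_preimage (Q : finType) (r : nat) (delta : local_rule Q r)
  (n : nat) (u v : seq Q) : Prop :=
  size v = (size u + 2 * r * n)%N /\ iter n (local_image delta) v = u.

Definition bernoulli_cyl (R : realType) (Q : finType) (p : Q -> R)
  (v : seq Q) : R := \prod_(a : Q) p a ^+ count_mem a v.

Definition complete_bernoulli (R : realType) (Q : finType) (p : Q -> R) : Prop :=
  (forall a, 0 < p a) /\ \sum_(a : Q) p a = 1.

(* A^n mu([u]_0) = mu(A^{-n}([u]_0)); A^{-n}([u]_0) is the disjoint union of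
   the cylinders [v]_{-rn}, v \in A^{-n}(u). *)
Definition pushforward_cyl (R : realType) (Q : finType) (r : nat)
  (delta : local_rule Q r) (p : Q -> R) (n : nat) (u : seq Q) : R :=
  \sum_(v : (size u + 2 * r * n).-tuple Q |
          iter n (local_image delta) (tval v) == u) bernoulli_cyl p v.

Definition persistent (R : realType) (Q : finType) (r : nat)
  (delta : local_rule Q r) (p : Q -> R) (u : seq Q) : Prop :=
  ~ (pushforward_cyl delta p n u @[n --> \oo] --> (0 : R)).

Definition in_pattern (Q : finType) (l1 l2 l3 : nat) (w v : seq Q) : Prop :=
  exists a b c : seq Q,
    [/\ size a = l1, size b = l2, size c = l3 & v = a ++ w ++ b ++ w ++ c].

(* Main.v *)
Require Import Defs.
From HB Require Import structures.
From mathcomp Require Import all_boot all_order all_algebra.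
From mathcomp Require Import all_classical all_reals all_analysis.
From mathcomp Require Import zify ring lra.
Set Implicit Arguments. Unset Strict Implicit. Unset Printing Implicit Defensive.
Import Order.TTheory GRing.Theory Num.Theory.
Import numFieldNormedType.Exports.
Local Open Scope ring_scope.
Local Open Scope classical_set_scope.

Fixpoint W (R : realType) (Q : finType) (n : nat) (F : seq Q -> R) : R :=
  match n with 0%N => F [::] | n'.+1 => \sum_(a : Q) W n' (fun s => F (a :: s)) end.

Lemma W_ext (R : realType) (Q : finType) n (F G : seq Q -> R) :
  (forall s, size s = n -> F s = G s) -> W n F = W n G.
Proof.
elim: n F G => [|n IH] F G H /=; first by apply: H.
apply: eq_bigr => a _; apply: IH => s Hs; apply: H; by rewrite /= Hs.
Qed.

Lemma W_le (R : realType) (Q : finType) n (F G : seq Q -> R) :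
  (forall s, size s = n -> F s <= G s) -> W n F <= W n G.
Proof.
elim: n F G => [|n IH] F G H /=; first by apply: H.
apply: ler_sum => a _; apply: IH => s Hs; apply: H; by rewrite /= Hs.
Qed.

Lemma W_add (R : realType) (Q : finType) n (F G : seq Q -> R) :
  W n (fun s => F s + G s) = W n F + W n G.
Proof.
elim: n F G => [|n IH] F G //=.
rewrite -big_split /=; apply: eq_bigr => a _; exact: IH.
Qed.

Lemma W_scale (R : realType) (Q : finType) n (F : seq Q -> R) k :
  W n (fun s => k * F s) = k * W n F.
Proof.
elim: n F => [|n IH] F //=.
rewrite mulr_sumr; apply: eq_bigr => a _; exact: IH.
Qed.

Lemma W_cat (R : realType) (Q : finType) a b (F : seq Q -> R) :
  W (a + b) F = W a (fun x => W b (fun y => F (x ++ y))).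
Proof.
elim: a F => [|a IH] F //=.
apply: eq_bigr => c _; exact: IH.
Qed.

Definition cyl (R : realType) (Q : finType) (p : Q -> R) (v : seq Q) : R :=
  \prod_(a : Q) p a ^+ count_mem a v.

Lemma cyl_cat (R : realType) (Q : finType) (p : Q -> R) x y :
  cyl p (x ++ y) = cyl p x * cyl p y.
Proof.
rewrite /cyl -big_split /=; apply: eq_bigr => a _; by rewrite count_cat exprD.
Qed.

Lemma cyl_nil (R : realType) (Q : finType) (p : Q -> R) : cyl p [::] = 1.
Proof. by rewrite /cyl big1. Qed.

Lemma cyl_cons (R : realType) (Q : finType) (p : Q -> R) a s :
  cyl p (a :: s) = p a * cyl p s.
Proof.
rewrite -cat1s cyl_cat; congr (_ * _).
rewrite /cyl (bigD1 a) //= eqxx expr1 big1 ?mulr1 // => b /negbTE.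
by rewrite eq_sym => ->; rewrite expr0.
Qed.

Lemma cyl_ge0 (R : realType) (Q : finType) (p : Q -> R) s :
  (forall a, 0 < p a) -> 0 <= cyl p s.
Proof. move=> H; apply: prodr_ge0 => a _; apply: exprn_ge0; exact: ltW. Qed.

Lemma cyl_gt0 (R : realType) (Q : finType) (p : Q -> R) s :
  (forall a, 0 < p a) -> 0 < cyl p s.
Proof. move=> H; apply: prodr_gt0 => a _; apply: exprn_gt0; exact: H. Qed.

Lemma W_cyl (R : realType) (Q : finType) (p : Q -> R) n :
  \sum_(a : Q) p a = 1 -> W n (cyl p) = 1.
Proof.
move=> Hs; elim: n => [|n IH] /=; first exact: cyl_nil.
rewrite -[RHS]Hs; apply: eq_bigr => a _.
rewrite (W_ext (G := fun s => p a * cyl p s)); last by move=> s _; rewrite cyl_cons.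
by rewrite W_scale IH mulr1.
Qed.

Lemma W_zero (R : realType) (Q : finType) n :
  W n (fun _ : seq Q => 0 : R) = 0.
Proof. elim: n => [|n IH] //=; exact: big1. Qed.

Lemma W_delta (R : realType) (Q : finType) (w : seq Q) (G : seq Q -> R) :
  W (size w) (fun x => (x == w)%:R * G x) = G w.
Proof.
elim: w G => [|a w IH] G /=; first by rewrite mul1r.
rewrite (bigD1 a) //= big1 ?addr0.
  rewrite -(IH (fun x => G (a :: x))); apply: W_ext => s _.
  by rewrite eqseq_cons eqxx.
move=> b Hb; rewrite -(W_zero R Q (size w)); apply: W_ext => s _.
by rewrite eqseq_cons (negbTE Hb) mul0r.
Qed.
Lemma tuple_sum (R : realType) (Q : finType) n (G : seq Q -> R) :
  \sum_(t : n.-tuple Q) G t = W n G.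
Proof.
elim: n G => [|n IH] G /=.
  rewrite (big_pred1 [tuple]) // => t; rewrite [t]tuple0 /=; exact/esym/eqP.
rewrite (reindex (fun x : Q * n.-tuple Q => [tuple of x.1 :: x.2])) /=; last first.
  exists (fun t : n.+1.-tuple Q => (thead t, [tuple of behead t])).
    by case=> a t _ /=; congr pair; apply: val_inj.
  move=> t _; apply: val_inj => /=; by rewrite [in RHS](tuple_eta t).
rewrite -(pair_bigA _ (fun a (t : n.-tuple Q) => G (a :: t))) /=; apply: eq_bigr => a _; exact: IH.
Qed.

Lemma W_scaler (R : realType) (Q : finType) n (F : seq Q -> R) k :
  W n (fun s => F s * k) = W n F * k.
Proof. rewrite mulrC -W_scale; apply: W_ext => s _; exact: mulrC. Qed.

Lemma W_window (R : realType) (Q : finType) (p : Q -> R) o M rest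
    (G : seq Q -> R) :
  \sum_(a : Q) p a = 1 ->
  W (o + M + rest) (fun v => G (take M (drop o v)) * cyl p v)
  = W M (fun L => G L * cyl p L).
Proof.
move=> Hs; rewrite W_cat.
rewrite (W_ext (G := fun x => G (take M (drop o x)) * cyl p x)); last first.
  move=> x Hx.
  rewrite (W_ext (G := fun y => (G (take M (drop o x)) * cyl p x) * cyl p y)).
    by rewrite W_scale W_cyl // mulr1.
  move=> y _; rewrite cyl_cat mulrA; congr (G _ * _ * _).
  rewrite drop_cat; case: ifP => Ho.
    by rewrite takel_cat // size_drop Hx; lia.
  have -> : M = 0%N by move: Ho; rewrite Hx; lia.
  by rewrite !take0.
rewrite W_cat.
rewrite (W_ext (G := fun x => cyl p x * W M (fun L => G L * cyl p L))).
  by rewrite W_scaler W_cyl // mul1r.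
move=> x Hx; rewrite -W_scale; apply: W_ext => L HL.
by rewrite drop_size_cat // -HL take_size cyl_cat mulrCA.
Qed.

Definition hit (Q : finType) (w : seq Q) (m : nat) (L : seq Q) : bool :=
  has (fun i => take (size w) (drop (i * (size w).+1) L) == w) (iota 0 m).

Lemma hit_cons_block (Q : finType) (w : seq Q) m B L :
  size B = (size w).+1 ->
  hit w m.+1 (B ++ L) = (take (size w) B == w) || hit w m L.
Proof.
move=> HB; rewrite /hit /= mul0n drop0 takel_cat ?HB //.
congr orb; rewrite -[1%N]addn0 iotaDl has_map; apply: eq_has => i /=.
by rewrite mulSn drop_cat HB ltnNge leq_addr /= addnC addnK.
Qed.

Lemma W_nohit (R : realType) (Q : finType) (p : Q -> R) (w : seq Q) m :
  \sum_(a : Q) p a = 1 ->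
  W (m * (size w).+1) (fun L => (~~ hit w m L)%:R * cyl p L) = (1 - cyl p w) ^+ m.
Proof.
move=> Hs; elim: m => [|m IH].
  by rewrite mul0n /= /hit /= mul1r cyl_nil expr0.
rewrite mulSn W_cat exprS.
rewrite (W_ext (G := fun B => ((take (size w) B != w)%:R * cyl p B) * (1 - cyl p w) ^+ m)); last first.
  move=> B HB; rewrite -IH -W_scale; apply: W_ext => L _.
  rewrite hit_cons_block // negb_or cyl_cat.
  by case: (_ == w); case: (hit w m L) => /=; ring.
rewrite W_scaler; congr (_ * _).
rewrite (W_ext (G := fun B => cyl p B - (take (size w) B == w)%:R * cyl p B)); last first.
  by move=> B _; case: (_ == _) => /=; ring.
have -> : forall F G : seq Q -> R, forall k, W k (fun s => F s - G s) = W k F - W k G.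
  move=> F G k; apply/eqP; rewrite eq_sym subr_eq -W_add; apply/eqP.
  by apply: W_ext => s _; ring.
rewrite W_cyl //; congr (_ - _).
rewrite -addn1 W_cat -[RHS](W_delta w (cyl p)); apply: W_ext => x Hx.
rewrite (W_ext (G := fun y => ((x == w)%:R * cyl p x) * cyl p y)).
  by rewrite W_scale W_cyl // mulr1.
by move=> y _; rewrite takel_cat ?Hx // -Hx take_size cyl_cat mulrA.
Qed.

Lemma pattern_of_occ (Q : finType) (w v : seq Q) p1 q :
  take (size w) (drop p1 v) = w ->
  take (size w) (drop (p1 + size w + q) v) = w ->
  (p1 + size w + q + size w <= size v)%N ->
  in_pattern p1 q (size v - (p1 + size w + q + size w)) w v.
Proof.
move=> H1 H2 Hs.
exists (take p1 v), (take q (drop (p1 + size w) v)), (drop (p1 + size w + q + size w) v).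
split.
- rewrite size_take; case: ifP => //; lia.
- rewrite size_take size_drop; case: ifP => //; lia.
- by rewrite size_drop.
rewrite -{1}(cat_take_drop p1 v); congr (_ ++ _).
rewrite -{1}(cat_take_drop (size w) (drop p1 v)) H1 drop_drop; congr (_ ++ _).
rewrite -{1}(cat_take_drop q (drop (size w + p1) v)) addnC; congr (_ ++ _).
rewrite drop_drop -{1}(cat_take_drop (size w) (drop (q + (p1 + size w)) v)).
have -> : (q + (p1 + size w) = p1 + size w + q)%N by lia.
by rewrite H2 drop_drop addnC.
Qed.

Lemma hit_occ (Q : finType) (w v : seq Q) m o :
  hit w m (take (m * (size w).+1) (drop o v)) ->
  exists i, (i < m)%N /\ take (size w) (drop (o + i * (size w).+1) v) = w.
Proof.
move=> /hasP [i]; rewrite mem_iota add0n => /andP [_ Hi] /eqP H.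
exists i; split => //; rewrite -[RHS]H.
have Hle : (size w + i * (size w).+1 <= m * (size w).+1)%N.
  have : (i.+1 * (size w).+1 <= m * (size w).+1)%N by rewrite leq_mul2r Hi orbT.
  rewrite mulSn; lia.
by rewrite [RHS]take_drop take_takel // -take_drop drop_drop addnC.
Qed.

Lemma pf_W (R : realType) (Q : finType) (r : nat) (delta : local_rule Q r)
  (p : Q -> R) n u :
  pushforward_cyl delta p n u =
  W (size u + 2 * r * n) (fun v => (iter n (local_image delta) v == u)%:R * cyl p v).
Proof.
rewrite /pushforward_cyl big_mkcond /= -tuple_sum; apply: eq_bigr => t _.
by rewrite /bernoulli_cyl /cyl; case: ifP => _; rewrite ?mul1r ?mul0r.
Qed.

Lemma exists_good (R : realType) (Q : finType) (r : nat)
  (delta : local_rule Q r) (p : Q -> R) (hp : complete_bernoulli p)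
  (w u : seq Q) eps n m :
  eps <= pushforward_cyl delta p n u ->
  (1 - cyl p w) ^+ m * 2 < eps ->
  (m * (size w).+1 + 1 <= r * n)%N ->
  exists v, [/\ size v = (size u + 2 * r * n)%N,
    iter n (local_image delta) v = u,
    exists i, (i < m)%N /\ take (size w) (drop (r * n - m * (size w).+1 + i * (size w).+1) v) = w &
    exists j, (j < m)%N /\ take (size w) (drop (r * n + size u + 1 + j * (size w).+1) v) = w].
Proof.
case: hp => hp0 hps => Hpf Hm Hn.
case: (pselect (exists v, [/\ size v = (size u + 2 * r * n)%N,
    iter n (local_image delta) v = u,
    exists i, (i < m)%N /\ take (size w) (drop (r * n - m * (size w).+1 + i * (size w).+1) v) = w &
    exists j, (j < m)%N /\ take (size w) (drop (r * n + size u + 1 + j * (size w).+1) v) = w])) => // Hno.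
exfalso.
set M := (m * (size w).+1)%N in Hn Hno.
set o1 := (r * n - M)%N; set o2 := (r * n + size u + 1)%N.
have key : forall v, size v = (size u + 2 * r * n)%N ->
    iter n (local_image delta) v = u ->
    hit w m (take M (drop o1 v)) -> hit w m (take M (drop o2 v)) -> False.
  move=> v Hv Hi H1 H2; apply: Hno; exists v; split => //.
    exact: hit_occ H1.
  exact: hit_occ H2.
have : pushforward_cyl delta p n u <= (1 - cyl p w) ^+ m * 2.
  rewrite pf_W.
  apply: (@le_trans _ _ (W (size u + 2 * r * n)
     (fun v => (~~ hit w m (take M (drop o1 v)))%:R * cyl p v +
               (~~ hit w m (take M (drop o2 v)))%:R * cyl p v))).
    apply: W_le => v Hv.
    have c0 := cyl_ge0 v hp0.
    case E0: (iter n (local_image delta) v == u);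
    case E1: (hit w m (take M (drop o1 v)));
    case E2: (hit w m (take M (drop o2 v))) => /=; try lra.
    exfalso; apply: (key v Hv (eqP E0)); by rewrite ?E1 ?E2.
  rewrite W_add.
  have -> : (size u + 2 * r * n = o1 + M + (size u + r * n))%N.
    rewrite /o1 -mulnA mul2n -addnn; lia.
  rewrite (W_window _ _ _ (fun L => (~~ hit w m L)%:R) hps).
  have -> : (o1 + M + (size u + r * n) = o2 + M + (r * n - 1 - M))%N.
    rewrite /o1 /o2; lia.
  rewrite (W_window _ _ _ (fun L => (~~ hit w m L)%:R) hps).
  by rewrite /M W_nohit // mulr2n mulrDr mulr1.
lra.
Qed.

Lemma inf_or_fin (P : nat -> Prop) :
  (forall N0, exists n, (N0 <= n)%N /\ P n) \/ (exists N1, forall n, (N1 <= n)%N -> ~ P n).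
Proof.
case: (pselect (exists N1, forall n, (N1 <= n)%N -> ~ P n)) => H; [by right|left].
move=> N0; case: (pselect (exists n, (N0 <= n)%N /\ P n)) => // H'; exfalso.
apply: H; exists N0 => n Hn Pn; apply: H'; by exists n.
Qed.

Lemma pigeon (I : finType) (P : nat -> I -> Prop) :
  (forall N0, exists n, (N0 <= n)%N /\ exists i, P n i) ->
  exists i, forall N0, exists n, (N0 <= n)%N /\ P n i.
Proof.
move=> H; case: (pselect (exists i, forall N0, exists n, (N0 <= n)%N /\ P n i)) => // Hno.
exfalso.
have Hf : forall i, exists N1, forall n, (N1 <= n)%N -> ~ P n i.
  move=> i; case: (inf_or_fin (P^~ i)) => // Hi; exfalso; apply: Hno; by exists i.
case: (choice Hf) => f Hfi.
case: (H (\max_i f i)) => n [Hn [i Pi]].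
apply: (Hfi i n) => //; apply: leq_trans Hn; exact: leq_bigmax.
Qed.

Lemma pf_ge0 (R : realType) (Q : finType) (r : nat) (delta : local_rule Q r)
  (p : Q -> R) (hp : complete_bernoulli p) n u : 0 <= pushforward_cyl delta p n u.
Proof. apply: sumr_ge0 => t _; apply: cyl_ge0; by case: hp. Qed.

Lemma persist_eps (R : realType) (Q : finType) (r : nat) (delta : local_rule Q r)
  (p : Q -> R) (hp : complete_bernoulli p) u :
  persistent delta p u ->
  exists eps, 0 < eps /\ forall N0, exists n, (N0 <= n)%N /\ eps <= pushforward_cyl delta p n u.
Proof.
move=> hu; case: (pselect (exists eps, 0 < eps /\ forall N0, exists n, (N0 <= n)%N /\ eps <= pushforward_cyl delta p n u)) => // Hno.
exfalso; apply: hu; apply/cvgr0Pnorm_lt => e e0.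
case: (inf_or_fin (fun n => e <= pushforward_cyl delta p n u)) => [Hi|[N1 HN1]].
  exfalso; apply: Hno; by exists e.
exists N1 => // n /= Hn; rewrite ger0_norm ?pf_ge0 //.
by rewrite ltNge; apply/negP => He; apply: (HN1 n Hn).
Qed.

Lemma small_pow (R : realType) (z e : R) : 0 <= z < 1 -> 0 < e ->
  exists m, z ^+ m * 2 < e.
Proof.
move=> /andP [z0 z1] e0.
have /cvgr0_norm_lt : (GRing.exp z : R ^nat) @ \oo --> 0 by apply: cvg_expr; rewrite ger0_norm.
move=> /(_ (e / 2)) []; first lra.
move=> N _ HN; exists N; have := HN N (leqnn N) => /=.
rewrite ger0_norm ?exprn_ge0 //; lra.
Qed.

Unset Implicit Arguments.

Theorem mainTheorem2 (R : realType) (Q : finType) (r : nat) (hr : (0 < r)%N)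
  (delta : local_rule Q r) (p : Q -> R) (hp : complete_bernoulli p)
  (w u : seq Q) (hu : persistent delta p u) :
  exists (k1 k2 : nat) (ns : nat -> nat),
    [/\ (0 < k1)%N, (0 < k2)%N,
        (forall j, (0 < ns j)%N),
        (forall j, (ns j < ns j.+1)%N) &
        forall j, exists v : seq Q,
          in_preimage delta (ns j) u v /\
          in_pattern (r * ns j - k1 - size w)%N (k1 + k2 + size u)%N
                     (r * ns j - k2 - size w)%N w v].
Proof.
have [eps [eps0 Heps]] := persist_eps hp hu.
have [hp0 hps] := hp.
set c := cyl p w.
have c0 : 0 < c by apply: cyl_gt0.
have c1 : c <= 1.
  rewrite /c -(W_delta w (cyl p)) -[X in _ <= X](W_cyl (size w) hps); apply: W_le => s _.
  have := cyl_ge0 s hp0; case: (s == w) => /=; lra.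
have [m Hm] : exists m, (1 - c) ^+ m * 2 < eps by apply: small_pow => //; apply/andP; split; lra.
set d := (size w).+1.
set M := (m * d)%N.
pose k1 (i : 'I_m) := (M - i * d - size w)%N.
pose k2 (j : 'I_m) := (1 + j * d)%N.
pose Good n (ij : 'I_m * 'I_m) := (0 < n)%N /\ exists v : seq Q,
  in_preimage delta n u v /\
  in_pattern (r * n - k1 ij.1 - size w)%N (k1 ij.1 + k2 ij.2 + size u)%N
             (r * n - k2 ij.2 - size w)%N w v.
have Hinf : forall N0, exists n, (N0 <= n)%N /\ exists ij, Good n ij.
  move=> N0; have [n [Hn Hpf]] := Heps (maxn N0 (M + 1)).
  have HrN : (M + 1 <= r * n)%N.
    have : (n <= r * n)%N by rewrite leq_pmull.
    move: Hn; rewrite geq_max => /andP [_ H]; lia.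
  have [v [Hv Hit [i [Hi Ei]] [j [Hj Ej]]]] := exists_good hp Hpf Hm HrN.
  exists n; split; first by move: Hn; rewrite geq_max => /andP [].
  exists (Ordinal Hi, Ordinal Hj); split.
    by move: HrN; lia.
  exists v; split; first by [].
  have HiM : (i * d + d <= M)%N.
    have : (i.+1 * d <= m * d)%N by rewrite leq_mul2r Hi orbT.
    by rewrite mulSn addnC.
  have HjM : (j * d + d <= M)%N.
    have : (j.+1 * d <= m * d)%N by rewrite leq_mul2r Hj orbT.
    by rewrite mulSn addnC.
  have Hd : d = (size w).+1 by [].
  have H2rn : (2 * r * n = r * n + r * n)%N by rewrite -mulnA mul2n addnn.
  have := @pattern_of_occ Q w v (r * n - M + i * d) (k1 (Ordinal Hi) + k2 (Ordinal Hj) + size u).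
  have E1 : (r * n - M + i * d + size w + (k1 (Ordinal Hi) + k2 (Ordinal Hj) + size u)
            = r * n + size u + 1 + j * d)%N.
    rewrite /k1 /k2 /=; lia.
  rewrite E1 => /(_ Ei Ej).
  have E2 : (r * n - M + i * d = r * n - k1 (Ordinal Hi) - size w)%N.
    rewrite /k1 /=; lia.
  have E3 : (size v - (r * n + size u + 1 + j * d + size w) = r * n - k2 (Ordinal Hj) - size w)%N.
    rewrite Hv /k2 /=; lia.
  rewrite E2 E3 /=; apply.
  rewrite Hv; lia.
have [ij Hij] := pigeon Hinf.
have [g Hg] := choice Hij.
pose ns := fix f j := if j is j'.+1 then g (f j').+1 else g 1%N.
have Hns : forall j, (ns j < ns j.+1)%N by move=> j /=; case: (Hg (ns j).+1).
exists (k1 ij.1), (k2 ij.2), ns; split.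
- rewrite /k1.
  have : (ij.1.+1 * d <= m * d)%N by rewrite leq_mul2r ltn_ord orbT.
  rewrite mulSn /M /d; lia.
- by rewrite /k2; lia.
- case => [|j] /=; first by case: (Hg 1%N).
  case: (Hg (ns j).+1) => H _; exact: leq_trans H.
- exact: Hns.
case=> [|j] /=; [case: (Hg 1%N) | case: (Hg (ns j).+1)] => _ [_ H]; exact: H.
Qed.
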